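(* In the full-information matching model described in the context, under the ACR policy $\pi^{\mathrm{ACR}}$, for every time horizon $T\ge0$, every initial state $A\in\mathbb{Z}_{\ge0}^{\ell+1}$ and every $i\in\mathcal{L}$, $$1+\mathbb{E}[M^{\pi^{\mathrm{ACR}}}(T)\mid A^{(0)}=A]\ \ge\ \mathbb{E}[M^{\pi^{\mathrm{ACR}}}(T)\mid A^{(0)}=A+e_0]\ \ge\ \mathbb{E}[M^{\pi^{\mathrm{ACR}}}(T)\mid A^{(0)}=A+e_i],$$ where $e_i\in\mathbb{Z}_{\ge0}^{\ell+1}$ is the $i$-th unit vector.
   Context: Job/agent types are $\mathcal{L}=\{0,1,\dots,\ell\}$. Agents of type $i$ arrive by a Poisson process of rate $\lambda_i>0$, jobs of type $j$ by a Poisson process of rate $\mu_j>0$, all independent. A type $0$ agent can fulfill every job type; a type $i\ge1$ agent only type $i$ jobs. Unmatched jobs are lost at arrival. Waiting agents abandon independently at exponential rate $\theta>0$; matched agents leave. The state $A=(A_0,\dots,A_\ell)$ counts waiting agents of each type, $A^{(0)}$ is the initial state, and $M^\pi(T)$ is the number of matches in $[0,T]$ under policy $\pi$. The ACR policy assigns an arriving type $j$ job to a uniformly random waiting type $j$ agent if one exists, otherwise to a uniformly random waiting type $0$ agent if one exists, otherwise the job is lost. *)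

(* Defs.v *)
From Stdlib Require Import Reals List Arith.
From Coquelicot Require Import Coquelicot.
Open Scope R_scope.

(* Types are 0..l (l = \ell).  A state is a function nat -> nat; only the
   coordinates 0..l are meaningful (number of waiting agents of each type). *)
Definition state := nat -> nat.

Definition unitv (i : nat) : state := fun k => if Nat.eqb k i then 1%nat else 0%nat.
Definition addv (a b : state) : state := fun k => (a k + b k)%nat.
Definition upd (a : state) (i v : nat) : state := fun k => if Nat.eqb k i then v else a k.

(* An event of the CTMC out of state a: (rate, number of matches it produces, next state). *)
Definition event := (R * R * state)%type.

(* Agents of the same type are exchangeable, so the
   uniformly random choice of the agent does not affect the counts. *)
Definition acr_job (a : state) (j : nat) : R * state :=
  if Nat.ltb 0 (a j) then (1, upd a j (a j - 1))
  else if Nat.ltb 0 (a 0%nat) then (1, upd a 0 (a 0%nat - 1))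
  else (0, a).

Definition events (l : nat) (lam mu : nat -> R) (theta : R) (a : state) : list event :=
  map (fun i => (lam i, 0, upd a i (a i + 1)%nat)) (seq 0 (S l))
  ++ map (fun j => (mu j, fst (acr_job a j), snd (acr_job a j))) (seq 0 (S l))
  ++ map (fun i => (theta * INR (a i), 0, upd a i (a i - 1)%nat)) (seq 0 (S l)).

Definition qrate (l : nat) (lam mu : nat -> R) (theta : R) (a : state) : R :=
  fold_right (fun e acc => fst (fst e) + acc) 0 (events l lam mu theta a).

(* Vn n t a = expected number of matches among the first n events of the
   (jump) process that occur in [0,t], started from a.  First-jump
   decomposition: holding time ~ Exp(q(a)), event e chosen w.p. rate_e/q(a). *)
Fixpoint Vn (l : nat) (lam mu : nat -> R) (theta : R) (n : nat) (t : R) (a : state) : R :=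
  match n with
  | O => 0
  | S n' =>
      RInt (fun s =>
        exp (- qrate l lam mu theta a * s) *
        fold_right (fun e acc =>
            fst (fst e) * (snd (fst e) + Vn l lam mu theta n' (t - s) (snd e)) + acc)
          0 (events l lam mu theta a)) 0 t
  end.

Definition ExpMatches (l : nat) (lam mu : nat -> R) (theta : R) (T : R) (a : state) : Rbar :=
  Lim_seq (fun n => Vn l lam mu theta n T a).

(* Main.v *)
Require Import Defs.
From Stdlib Require Import Reals List Arith.
From Coquelicot Require Import Coquelicot.
Open Scope R_scope.
From Stdlib Require Import Lia Lra FunctionalExtensionality.

Definition Conv q (h : R -> R) t := RInt (fun s => exp (- q * s) * h (t - s)) 0 t.

Definition fsum {X : Type} (F : X -> R) (L : list X) : R :=
  fold_right (fun x acc => F x + acc) 0 L.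

Definition Iabs l lam mu theta (V : state -> R) (a : state) : R :=
  fsum (fun e : event => fst (fst e) * (snd (fst e) + V (snd e))) (events l lam mu theta a).

Lemma Vn_S l lam mu theta n t a :
  Vn l lam mu theta (S n) t a =
  Conv (qrate l lam mu theta a) (fun r => Iabs l lam mu theta (Vn l lam mu theta n r) a) t.
Proof. reflexivity. Qed.

Lemma fsum_app {X} (F : X -> R) L1 L2 : fsum F (L1 ++ L2) = fsum F L1 + fsum F L2.
Proof. induction L1; simpl; [ring|]. unfold fsum in *; simpl. rewrite IHL1. ring. Qed.

Lemma fsum_map {X Y} (F : Y -> R) (g : X -> Y) L : fsum F (map g L) = fsum (fun x => F (g x)) L.
Proof. induction L; simpl; auto. unfold fsum in *; simpl. rewrite IHL. ring. Qed.

Lemma fsum_le {X} (F G : X -> R) L : (forall x, In x L -> F x <= G x) -> fsum F L <= fsum G L.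
Proof.
  induction L; simpl; intros H; unfold fsum in *; simpl. lra.
  apply Rplus_le_compat. apply H; auto. apply IHL; auto.
Qed.

Lemma fsum_plus {X} (F G : X -> R) L : fsum (fun x => F x + G x) L = fsum F L + fsum G L.
Proof. induction L; unfold fsum in *; simpl. ring. rewrite IHL. ring. Qed.

Lemma fsum_ind_seq (k : nat) (c : R) s n :
  fsum (fun j => if Nat.eqb j k then c else 0) (seq s n) =
  if andb (Nat.leb s k) (Nat.ltb k (s + n)) then c else 0.
Proof.
  revert s. induction n; intro s; unfold fsum in *; simpl.
  - destruct (Nat.leb_spec s k); destruct (Nat.ltb_spec k (s + 0)); simpl; try lra; lia.
  - rewrite IHn. destruct (Nat.eqb_spec s k).
    + subst. destruct (Nat.leb_spec (S k) k); try lia. simpl.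
      destruct (Nat.leb_spec k k); destruct (Nat.ltb_spec k (k + S n)); simpl; try lia. ring.
    + destruct (Nat.leb_spec (S s) k); destruct (Nat.ltb_spec k (S s + n));
      destruct (Nat.leb_spec s k); destruct (Nat.ltb_spec k (s + S n)); simpl; try ring; lia.
Qed.

Lemma fsum_ind l k c : (k <= l)%nat ->
  fsum (fun j => if Nat.eqb j k then c else 0) (seq 0 (S l)) = c.
Proof.
  intro H. rewrite fsum_ind_seq. destruct (Nat.leb_spec 0 k); destruct (Nat.ltb_spec k (0 + S l)); simpl; auto; lia.
Qed.

Definition SS l := seq 0 (S l).

Lemma Iabs_dec l lam mu theta V a :
  Iabs l lam mu theta V a =
  fsum (fun j => lam j * (0 + V (upd a j (a j + 1)%nat))) (SS l) +
  fsum (fun j => mu j * (fst (acr_job a j) + V (snd (acr_job a j)))) (SS l) +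
  fsum (fun j => theta * INR (a j) * (0 + V (upd a j (a j - 1)%nat))) (SS l).
Proof.
  unfold Iabs, events. rewrite !fsum_app, !fsum_map. cbn [fst snd]. unfold SS. rewrite Rplus_assoc. reflexivity.
Qed.

Lemma qrate_dec l lam mu theta a :
  qrate l lam mu theta a =
  fsum lam (SS l) + fsum mu (SS l) + fsum (fun j => theta * INR (a j)) (SS l).
Proof.
  unfold qrate, events. change (fold_right (fun e acc => fst (fst e) + acc) 0) with (@fsum event (fun e => fst (fst e))).
  rewrite !fsum_app, !fsum_map. cbn [fst snd]. unfold SS. rewrite Rplus_assoc. reflexivity.
Qed.

Ltac dst := repeat match goal with
 | |- context [Nat.eqb ?x ?y] => destruct (Nat.eqb_spec x y); try subst
 | H : context [Nat.eqb ?x ?y] |- _ => destruct (Nat.eqb_spec x y); try subst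
 end.

Ltac solve_st := apply functional_extensionality; intro; unfold addv, unitv, upd in *; dst; lia.

Lemma acr_spec a j :
  ((0 < a j)%nat /\ acr_job a j = (1, upd a j (a j - 1)%nat)) \/
  (a j = 0%nat /\ (0 < a 0%nat)%nat /\ acr_job a j = (1, upd a 0 (a 0%nat - 1)%nat)) \/
  (a j = 0%nat /\ a 0%nat = 0%nat /\ acr_job a j = (0, a)).
Proof.
  unfold acr_job. destruct (Nat.ltb_spec 0 (a j)).
  - left; auto.
  - destruct (Nat.ltb_spec 0 (a 0%nat)).
    + right; left. repeat split; auto; lia.
    + right; right. repeat split; auto; lia.
Qed.

Section S.
Context (l : nat) (V : state -> R).
Hypothesis H1 : forall c kk, (kk <= l)%nat -> V (addv c (unitv kk)) <= 1 + V c.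

Lemma cA mX mY X' Y' kk : mX = mY -> X' = addv Y' (unitv kk) -> (kk <= l)%nat ->
  mX + V X' <= mY + V Y' + 1.
Proof. intros -> -> Hk. specialize (H1 Y' kk Hk). lra. Qed.

Lemma cB mX mY X' Y' : mX = mY + 1 -> X' = Y' -> mX + V X' <= mY + V Y' + 1.
Proof. intros -> ->. lra. Qed.

Lemma acr_P1 b k j : (k <= l)%nat ->
  fst (acr_job (addv b (unitv k)) j) + V (snd (acr_job (addv b (unitv k)) j)) <=
  fst (acr_job b j) + V (snd (acr_job b j)) + 1.
Proof.
  intro Hk.
  destruct (acr_spec (addv b (unitv k)) j) as [[h e]|[[h1 [h2 e]]|[h1 [h2 e]]]]; rewrite e; clear e;
  (destruct (acr_spec b j) as [[g e]|[[g1 [g2 e]]|[g1 [g2 e]]]]; rewrite e; clear e); cbn [fst snd];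
  first [ (unfold addv, unitv in *; dst; lia)
        | (apply cA with (kk := k); [lra|solve_st|lia])
        | (apply cA with (kk := 0%nat); [lra|solve_st|lia])
        | (apply cB; [lra|solve_st]) ].
Qed.

Hypothesis H2 : forall c ii, (ii <= l)%nat -> V (addv c (unitv ii)) <= V (addv c (unitv 0)).

Lemma dA mX mY X' Y' i : (i <= l)%nat -> mX = mY ->
  X' = addv (upd Y' 0 (Y' 0%nat - 1)%nat) (unitv i) ->
  Y' = addv (upd Y' 0 (Y' 0%nat - 1)%nat) (unitv 0) ->
  mX + V X' <= mY + V Y'.
Proof. intros Hi -> E1 E2. assert (HH := H2 (upd Y' 0 (Y' 0%nat - 1)%nat) i Hi). rewrite <- E1, <- E2 in HH. lra. Qed.

Lemma dB mX mY X' Y' : mX = mY -> X' = Y' -> mX + V X' <= mY + V Y'.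
Proof. intros -> ->. lra. Qed.

Lemma dC mX mY X' Y' kk : mX + 1 = mY -> X' = addv Y' (unitv kk) -> (kk <= l)%nat ->
  mX + V X' <= mY + V Y'.
Proof. intros E -> Hk. specialize (H1 Y' kk Hk). lra. Qed.

Lemma acr_P2 b i j : (i <= l)%nat ->
  fst (acr_job (addv b (unitv i)) j) + V (snd (acr_job (addv b (unitv i)) j)) <=
  fst (acr_job (addv b (unitv 0)) j) + V (snd (acr_job (addv b (unitv 0)) j)).
Proof.
  intro Hi. destruct (Nat.eq_dec i 0) as [->|Hi0]; [lra|].
  destruct (acr_spec (addv b (unitv i)) j) as [[h e]|[[h1 [h2 e]]|[h1 [h2 e]]]]; rewrite e; clear e;
  (destruct (acr_spec (addv b (unitv 0)) j) as [[g e]|[[g1 [g2 e]]|[g1 [g2 e]]]]; rewrite e; clear e); cbn [fst snd];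
  first [ (unfold addv, unitv in *; dst; lia)
        | (apply dB; [lra|solve_st])
        | (apply (dA _ _ _ _ i Hi); [lra|solve_st|solve_st])
        | (apply dC with (kk := i); [lra|solve_st|lia]) ].
Qed.
End S.

Lemma in_SS l j : In j (SS l) -> (j <= l)%nat.
Proof. unfold SS. rewrite in_seq. lia. Qed.

Lemma INR_S' n : INR (n + 1) = INR n + 1.
Proof. rewrite plus_INR. simpl. ring. Qed.

Lemma fsum_indS l k c : (k <= l)%nat ->
  fsum (fun j => if Nat.eqb j k then c else 0) (SS l) = c.
Proof. apply fsum_ind. Qed.

Section T.
Context (l : nat) (lam mu : nat -> R) (theta : R).
Hypothesis Hlam : forall j, (j <= l)%nat -> 0 <= lam j.
Hypothesis Hmu : forall j, (j <= l)%nat -> 0 <= mu j.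
Hypothesis Hth : 0 <= theta.

Lemma I_mono (V W : state -> R) a : (forall c, V c <= W c) ->
  Iabs l lam mu theta V a <= Iabs l lam mu theta W a.
Proof.
  intro H. rewrite !Iabs_dec.
  apply Rplus_le_compat; [apply Rplus_le_compat|]; apply fsum_le; intros j Hj; apply in_SS in Hj;
  apply Rmult_le_compat_l; try (apply Rplus_le_compat_l; apply H); auto.
  apply Rmult_le_pos; auto. apply pos_INR.
Qed.

Lemma I_nonneg a : 0 <= Iabs l lam mu theta (fun _ => 0) a.
Proof.
  rewrite !Iabs_dec.
  assert (forall F : nat -> R, (forall j, In j (SS l) -> 0 <= F j) -> 0 <= fsum F (SS l)).
  { intros F HF. apply Rle_trans with (fsum (fun _ => 0) (SS l)).
    - clear. induction (SS l); unfold fsum in *; simpl; lra.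
    - apply fsum_le; auto. }
  apply Rplus_le_le_0_compat; [apply Rplus_le_le_0_compat|]; apply H; intros j Hj; apply in_SS in Hj.
  - rewrite Rplus_0_l. apply Rmult_le_pos; auto; lra.
  - apply Rmult_le_pos; auto. destruct (acr_spec a j) as [[_ e]|[[_ [_ e]]|[_ [_ e]]]]; rewrite e; simpl; lra.
  - apply Rmult_le_pos; [|lra]. apply Rmult_le_pos; auto. apply pos_INR.
Qed.

Lemma I_P1 (V W : state -> R) b k :
  (forall c kk, (kk <= l)%nat -> V (addv c (unitv kk)) <= 1 + V c) ->
  V b <= W b -> (k <= l)%nat ->
  Iabs l lam mu theta V (addv b (unitv k)) <=
  Iabs l lam mu theta V b + theta * W b + qrate l lam mu theta b.
Proof.
  intros H1 HVW Hk. rewrite !Iabs_dec, qrate_dec.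
  assert (A : fsum (fun j => lam j * (0 + V (upd (addv b (unitv k)) j (addv b (unitv k) j + 1)%nat))) (SS l)
     <= fsum (fun j => lam j * (0 + V (upd b j (b j + 1)%nat)) + lam j) (SS l)).
  { apply fsum_le. intros j Hj. apply in_SS in Hj.
    replace (upd (addv b (unitv k)) j (addv b (unitv k) j + 1)%nat) with (addv (upd b j (b j + 1)%nat) (unitv k)) by solve_st.
    specialize (H1 (upd b j (b j + 1)%nat) k Hk). specialize (Hlam j Hj). nra. }
  assert (B : fsum (fun j => mu j * (fst (acr_job (addv b (unitv k)) j) + V (snd (acr_job (addv b (unitv k)) j)))) (SS l)
     <= fsum (fun j => mu j * (fst (acr_job b j) + V (snd (acr_job b j))) + mu j) (SS l)).
  { apply fsum_le. intros j Hj. apply in_SS in Hj.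
    assert (HH := acr_P1 l V H1 b k j Hk). specialize (Hmu j Hj). nra. }
  assert (C : fsum (fun j => theta * INR (addv b (unitv k) j) * (0 + V (upd (addv b (unitv k)) j (addv b (unitv k) j - 1)%nat))) (SS l)
     <= fsum (fun j => (theta * INR (b j) * (0 + V (upd b j (b j - 1)%nat)) + theta * INR (b j))
                       + (if Nat.eqb j k then theta * W b else 0)) (SS l)).
  { apply fsum_le. intros j Hj. apply in_SS in Hj.
    destruct (Nat.eqb_spec j k).
    - subst j.
      replace (addv b (unitv k) k) with (b k + 1)%nat by (unfold addv, unitv; rewrite Nat.eqb_refl; lia).
      replace (upd (addv b (unitv k)) k (b k + 1 - 1)%nat) with b by solve_st.
      rewrite INR_S'.
      destruct (b k) eqn:Ebk.
      + simpl. nra.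
      + replace b with (addv (upd b k (b k - 1)%nat) (unitv k)) at 1 by solve_st.
        assert (HH := H1 (upd b k (b k - 1)%nat) k Hk).
        replace b with (addv (upd b k (b k - 1)%nat) (unitv k)) in HVW at 1 by solve_st.
        rewrite Ebk in HH, HVW |- *.
        assert (0 <= INR (S n)) by apply pos_INR.
        replace (S n - 1)%nat with n in * by lia.
        assert (P1 := Rmult_le_compat_l (theta*INR(S n)) _ _ (Rmult_le_pos _ _ Hth H) HH).
        assert (P2 := Rmult_le_compat_l theta _ _ Hth HVW). lra.
    - replace (addv b (unitv k) j) with (b j) by (unfold addv, unitv; destruct (Nat.eqb_spec j k); lia).
      replace (upd (addv b (unitv k)) j (b j - 1)%nat) with (addv (upd b j (b j - 1)%nat) (unitv k)) by solve_st.
      assert (HH := H1 (upd b j (b j - 1)%nat) k Hk).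
      assert (0 <= INR (b j)) by apply pos_INR.
      assert (P1 := Rmult_le_compat_l (theta*INR(b j)) _ _ (Rmult_le_pos _ _ Hth H) HH). lra. }
  rewrite !fsum_plus in A, B, C. rewrite fsum_indS in C by auto. rewrite (fsum_plus (fun j => theta*INR(b j)*(0+V(upd b j (b j - 1)%nat))) (fun j => theta*INR(b j))) in C. lra.
Qed.
End T.

Section T2.
Context (l : nat) (lam mu : nat -> R) (theta : R).
Hypothesis Hlam : forall j, (j <= l)%nat -> 0 <= lam j.
Hypothesis Hmu : forall j, (j <= l)%nat -> 0 <= mu j.
Hypothesis Hth : 0 <= theta.

Lemma I_P2 (V : state -> R) b i :
  (forall c kk, (kk <= l)%nat -> V (addv c (unitv kk)) <= 1 + V c) ->
  (forall c ii, (ii <= l)%nat -> V (addv c (unitv ii)) <= V (addv c (unitv 0))) ->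
  (i <= l)%nat ->
  Iabs l lam mu theta V (addv b (unitv i)) <= Iabs l lam mu theta V (addv b (unitv 0)).
Proof.
  intros H1 H2 Hi. destruct (Nat.eq_dec i 0) as [->|Hi0]; [lra|].
  rewrite !Iabs_dec.
  set (X := addv b (unitv i)). set (Y := addv b (unitv 0)).
  assert (A : fsum (fun j => lam j * (0 + V (upd X j (X j + 1)%nat))) (SS l)
     <= fsum (fun j => lam j * (0 + V (upd Y j (Y j + 1)%nat))) (SS l)).
  { apply fsum_le. intros j Hj. apply in_SS in Hj. unfold X, Y.
    replace (upd (addv b (unitv i)) j (addv b (unitv i) j + 1)%nat) with (addv (upd b j (b j + 1)%nat) (unitv i)) by solve_st.
    replace (upd (addv b (unitv 0)) j (addv b (unitv 0) j + 1)%nat) with (addv (upd b j (b j + 1)%nat) (unitv 0)) by solve_st.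
    apply Rmult_le_compat_l; auto. apply Rplus_le_compat_l. apply H2; auto. }
  assert (B : fsum (fun j => mu j * (fst (acr_job X j) + V (snd (acr_job X j)))) (SS l)
     <= fsum (fun j => mu j * (fst (acr_job Y j) + V (snd (acr_job Y j)))) (SS l)).
  { apply fsum_le. intros j Hj. apply in_SS in Hj.
    apply Rmult_le_compat_l; auto. apply (acr_P2 l V H1 H2); auto. }
  assert (C : fsum (fun j => theta * INR (X j) * (0 + V (upd X j (X j - 1)%nat)) + (if Nat.eqb j 0 then theta * V b else 0)) (SS l)
     <= fsum (fun j => theta * INR (Y j) * (0 + V (upd Y j (Y j - 1)%nat)) + (if Nat.eqb j i then theta * V b else 0)) (SS l)).
  { apply fsum_le. intros j Hj. apply in_SS in Hj. unfold X, Y.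
    destruct (Nat.eqb_spec j 0); [|destruct (Nat.eqb_spec j i)].
    - subst j. destruct (Nat.eqb_spec 0 i); [lia|].
      replace (addv b (unitv i) 0%nat) with (b 0%nat) by (unfold addv, unitv; destruct (Nat.eqb_spec 0 i); lia).
      replace (addv b (unitv 0) 0%nat) with (b 0%nat + 1)%nat by (unfold addv, unitv; simpl; lia).
      replace (upd (addv b (unitv 0)) 0 (b 0%nat + 1 - 1)%nat) with b by solve_st.
      rewrite INR_S'.
      destruct (b 0%nat) as [|m] eqn:E0.
      + simpl. lra.
      + replace (upd (addv b (unitv i)) 0 (S m - 1)%nat) with (addv (upd b 0 (b 0%nat - 1)%nat) (unitv i)) by (rewrite <- E0; solve_st).
        assert (HH := H2 (upd b 0 (b 0%nat - 1)%nat) i Hi).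
        replace (addv (upd b 0 (b 0%nat - 1)%nat) (unitv 0)) with b in HH by solve_st.
        assert (0 <= INR (S m)) by apply pos_INR.
        assert (P := Rmult_le_compat_l (theta*INR(S m)) _ _ (Rmult_le_pos _ _ Hth H) HH). lra.
    - subst j.
      replace (addv b (unitv i) i) with (b i + 1)%nat by (unfold addv, unitv; rewrite Nat.eqb_refl; lia).
      replace (addv b (unitv 0) i) with (b i) by (unfold addv, unitv; destruct (Nat.eqb_spec i 0); lia).
      replace (upd (addv b (unitv i)) i (b i + 1 - 1)%nat) with b by solve_st.
      rewrite INR_S'.
      destruct (b i) as [|m] eqn:Ei.
      + simpl. lra.
      + replace (upd (addv b (unitv 0)) i (S m - 1)%nat) with (addv (upd b i (b i - 1)%nat) (unitv 0)) by (rewrite <- Ei; solve_st).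
        assert (HH := H2 (upd b i (b i - 1)%nat) i Hi).
        replace (addv (upd b i (b i - 1)%nat) (unitv i)) with b in HH by solve_st.
        assert (0 <= INR (S m)) by apply pos_INR.
        assert (P := Rmult_le_compat_l (theta*INR(S m)) _ _ (Rmult_le_pos _ _ Hth H) HH). lra.
    - replace (addv b (unitv i) j) with (b j) by (unfold addv, unitv; destruct (Nat.eqb_spec j i); lia).
      replace (addv b (unitv 0) j) with (b j) by (unfold addv, unitv; destruct (Nat.eqb_spec j 0); lia).
      replace (upd (addv b (unitv i)) j (b j - 1)%nat) with (addv (upd b j (b j - 1)%nat) (unitv i)) by solve_st.
      replace (upd (addv b (unitv 0)) j (b j - 1)%nat) with (addv (upd b j (b j - 1)%nat) (unitv 0)) by solve_st.
      assert (HH := H2 (upd b j (b j - 1)%nat) i Hi).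
      assert (0 <= INR (b j)) by apply pos_INR.
      assert (P := Rmult_le_compat_l (theta*INR(b j)) _ _ (Rmult_le_pos _ _ Hth H) HH). lra. }
  rewrite (fsum_plus (fun j => theta * INR (X j) * (0 + V (upd X j (X j - 1)%nat)))) in C.
  rewrite (fsum_plus (fun j => theta * INR (Y j) * (0 + V (upd Y j (Y j - 1)%nat)))) in C.
  rewrite !fsum_indS in C by lia. lra.
Qed.
End T2.

Ltac Req := match goal with |- ?a = ?b => change (@eq R a b) end.

Definition Cont (f : R -> R) := forall x, continuous f x.

Lemma exdc (f : R -> R) x : ex_derive f x -> continuous f x.
Proof. intro H. exact (@ex_derive_continuous R_AbsRing R_NormedModule f x H). Qed.

Lemma cont_lin (a b : R) : Cont (fun s => a * s + b).
Proof. intro x. apply exdc. auto_derive. auto. Qed.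

Lemma cont_exp_lin (a : R) : Cont (fun s => exp (a * s)).
Proof. intro x. apply exdc. auto_derive. auto. Qed.

Lemma cont_mult f g : Cont f -> Cont g -> Cont (fun s => f s * g s).
Proof. intros Hf Hg x. apply (continuous_mult f g); auto. Qed.

Lemma cont_plus f g : Cont f -> Cont g -> Cont (fun s => f s + g s).
Proof. intros Hf Hg x. apply (continuous_plus f g); auto. Qed.

Lemma cont_const c : Cont (fun _ => c).
Proof. intro x. apply continuous_const. Qed.

Lemma cont_shift h t : Cont h -> Cont (fun s => h (t - s)).
Proof. intros Hh x. apply (continuous_comp (fun s => t - s) h); auto.
  apply exdc. auto_derive. auto. Qed.

Lemma ex_cont f a b : Cont f -> ex_RInt f a b.
Proof. intro H. apply (@ex_RInt_continuous R_CompleteNormedModule). intros; auto. Qed.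

Lemma derive_int F x : Cont F -> is_derive (fun t => RInt F 0 t) x (F x).
Proof.
  intro H. apply (is_derive_RInt F (fun t => RInt F 0 t) 0 x); auto.
  apply filter_forall. intro b. apply (@RInt_correct R_CompleteNormedModule). apply ex_cont; auto.
Qed.

Lemma cont_int F : Cont F -> Cont (fun t => RInt F 0 t).
Proof. intros H x. apply exdc. eexists. apply derive_int; auto. Qed.

Lemma comp_lin_R (f : R -> R) u v a b : ex_RInt f (u*a+v) (u*b+v) -> RInt (fun y => u * f (u*y+v)) a b = RInt f (u*a+v) (u*b+v).
Proof. intro H. exact (RInt_comp_lin f u v a b H). Qed.
Lemma swap_R (f : R -> R) a b : ex_RInt f a b -> RInt f b a = - RInt f a b.
Proof. intro H. rewrite <- (opp_RInt_swap f a b H). reflexivity. Qed.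
Lemma opp_R (f : R -> R) a b : ex_RInt f a b -> RInt (fun x => - f x) a b = - RInt f a b.
Proof. intro H. exact (RInt_opp f a b H). Qed.
Lemma scal_R (f : R -> R) a b k : ex_RInt f a b -> RInt (fun x => k * f x) a b = k * RInt f a b.
Proof. intro H. exact (RInt_scal f a b k H). Qed.
Lemma plus_R (f g : R -> R) a b : ex_RInt f a b -> ex_RInt g a b -> RInt (fun x => f x + g x) a b = RInt f a b + RInt g a b.
Proof. intros H1 H2. exact (RInt_plus f g a b H1 H2). Qed.

Lemma conv_alt q h t : Cont h ->
  RInt (fun s => exp (- q * s) * h (t - s)) 0 t =
  exp (- q * t) * RInt (fun u => exp (q * u) * h u) 0 t.
Proof.
  intro Hh.
  set (f := fun u => exp (- q * (t - u)) * h u).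
  assert (Hf : Cont f).
  { unfold f. apply cont_mult; auto.
    intro x. apply exdc. auto_derive. auto. }
  assert (E := comp_lin_R f (-1) t 0 t (ex_cont _ _ _ Hf)).
  replace (-1 * 0 + t) with t in E by ring.
  replace (-1 * t + t) with 0 in E by ring.
  rewrite (swap_R f 0 t) in E by (apply ex_cont; auto).
  assert (E2 : RInt (fun y : R => -1 * (f (-1 * y + t))) 0 t =
               - (RInt (fun s => exp (- q * s) * h (t - s)) 0 t)).
  { rewrite <- opp_R.
    2:{ apply ex_cont. apply cont_mult. apply cont_exp_lin. apply cont_shift; auto. }
    apply RInt_ext. intros x _. unfold f.
    replace (-1 * x + t) with (t - x) by ring.
    replace (- q * (t - (t - x))) with (- q * x) by ring. match goal with |- ?a = ?b => change (@eq R a b) end; ring. }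
  assert (E3 : RInt (fun s => exp (- q * s) * h (t - s)) 0 t = RInt f 0 t) by lra.
  rewrite E3. unfold f.
  rewrite <- (scal_R (fun u => exp (q * u) * h u)).
  2:{ apply ex_cont. apply cont_mult; auto. apply cont_exp_lin. }
  apply RInt_ext. intros x _.
  replace (- q * (t - x)) with (- q * t + q * x) by ring. rewrite exp_plus. Req; ring.
Qed.

Lemma conv_cont q h : Cont h -> Cont (fun t => RInt (fun s => exp (- q * s) * h (t - s)) 0 t).
Proof.
  intros Hh x.
  apply (continuous_ext (fun t => exp (- q * t) * RInt (fun u => exp (q * u) * h u) 0 t)).
  { intro t. rewrite conv_alt; auto. }
  apply cont_mult. apply cont_exp_lin. apply cont_int. apply cont_mult; auto. apply cont_exp_lin.
Qed.

Lemma is_derive_eq (f : R -> R) x l l' : is_derive f x l -> l = l' -> is_derive f x l'.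
Proof. intros H ->; exact H. Qed.

Lemma const_of_deriv0 (D : R -> R) t : (forall x, is_derive D x 0) -> D t = D 0.
Proof.
  intro H. destruct (Rtotal_order t 0) as [Hl|[He|Hg]].
  { apply (eq_is_derive D t 0). intros; apply H. exact Hl. }
  { rewrite He; reflexivity. }
  { symmetry. apply (eq_is_derive D 0 t). intros; apply H. exact Hg. }
Qed.



Lemma conv_ident q c h t : Cont h ->
  Conv q h t = Conv (q + c) (fun r => h r + c * Conv q h r) t.
Proof.
  intro Hh.
  assert (HV : Cont (Conv q h)) by (apply conv_cont; auto).
  assert (Hh2 : Cont (fun r => h r + c * Conv q h r)).
  { apply cont_plus; auto. apply cont_mult; auto. apply cont_const. }
  unfold Conv at 2.
  rewrite (conv_alt (q + c) _ t Hh2).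
  set (h2 := fun r => h r + c * Conv q h r).
  set (G := fun t => RInt (fun u => exp (q * u) * h u) 0 t).
  set (K := fun t => RInt (fun u => exp ((q + c) * u) * h2 u) 0 t).
  assert (VG : forall x, Conv q h x = exp (- q * x) * G x).
  { intro x. unfold Conv, G. apply conv_alt; auto. }
  assert (HG : forall x, is_derive G x (exp (q * x) * h x)).
  { intro x. apply (derive_int (fun u => exp (q * u) * h u)). apply cont_mult; auto. apply cont_exp_lin. }
  assert (HK : forall x, is_derive K x (exp ((q + c) * x) * h2 x)).
  { intro x. apply (derive_int (fun u => exp ((q + c) * u) * h2 u)). apply cont_mult; auto. apply cont_exp_lin. }
  set (D := fun x => exp (c * x) * G x - K x).
  assert (HD : forall x, is_derive D x 0).
  { intro x. unfold D.
    assert (He : is_derive (fun x => exp (c * x)) x (c * exp (c * x))).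
    { auto_derive. auto. ring. }
    assert (H1 := is_derive_mult _ _ _ _ _ He (HG x) ltac:(intros; apply Rmult_comm)).
    assert (H2 := is_derive_minus _ _ _ _ _ H1 (HK x)).
    eapply is_derive_eq. exact H2.
    unfold minus, plus, mult, opp; simpl. unfold h2. rewrite VG.
    replace ((q + c) * x) with (c * x + q * x) by ring. rewrite exp_plus.
    replace (q * x) with (- (- q * x)) by ring. rewrite exp_Ropp.
    field. apply Rgt_not_eq, exp_pos. }
  assert (D0 : D 0 = 0).
  { unfold D, G, K. rewrite !RInt_point. unfold zero; simpl. ring. }
  assert (Dt := const_of_deriv0 D t HD). rewrite D0 in Dt. unfold D in Dt.
  rewrite VG. fold (K t).
  replace (- (q + c) * t) with (- q * t + - (c * t)) by ring. rewrite exp_plus, exp_Ropp.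
  assert (K t = exp (c * t) * G t) by lra. change (RInt (fun u : R => exp ((q + c) * u) * (h u + c * Conv q h u)) 0 t) with (K t). rewrite H. Req.
  field. apply Rgt_not_eq, exp_pos.
Qed.

Lemma conv_ext q h1 h2 t : (forall r, h1 r = h2 r) -> Conv q h1 t = Conv q h2 t.
Proof. intro H. replace h1 with h2; auto. symmetry. apply functional_extensionality; auto. Qed.

Lemma conv_plus q h1 h2 t : Cont h1 -> Cont h2 ->
  Conv q (fun r => h1 r + h2 r) t = Conv q h1 t + Conv q h2 t.
Proof.
  intros H1 H2. unfold Conv. rewrite <- plus_R.
  - apply RInt_ext. intros x _. Req; ring.
  - apply ex_cont. apply cont_mult. apply cont_exp_lin. apply cont_shift; auto.
  - apply ex_cont. apply cont_mult. apply cont_exp_lin. apply cont_shift; auto.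
Qed.

Lemma conv_le q h1 h2 t : 0 <= t -> Cont h1 -> Cont h2 ->
  (forall r, 0 <= r <= t -> h1 r <= h2 r) -> Conv q h1 t <= Conv q h2 t.
Proof.
  intros Ht H1 H2 H. unfold Conv. apply RInt_le; auto.
  - apply ex_cont. apply cont_mult. apply cont_exp_lin. apply cont_shift; auto.
  - apply ex_cont. apply cont_mult. apply cont_exp_lin. apply cont_shift; auto.
  - intros x Hx. apply Rmult_le_compat_l. left; apply exp_pos. apply H. lra.
Qed.

Lemma conv_nonneg q h t : 0 <= t -> Cont h -> (forall r, 0 <= r <= t -> 0 <= h r) -> 0 <= Conv q h t.
Proof.
  intros Ht H1 H. unfold Conv. apply RInt_ge_0; auto.
  - apply ex_cont. apply cont_mult. apply cont_exp_lin. apply cont_shift; auto.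
  - intros x Hx. apply Rmult_le_pos. left; apply exp_pos. apply H. lra.
Qed.

Lemma conv_const_bound q th t : 0 <= q -> 0 < th -> 0 <= t -> Conv (q + th) (fun _ => q) t <= 1.
Proof.
  intros Hq Hth Ht. unfold Conv.
  set (k := q + th).
  assert (Hk : 0 < k) by (unfold k; lra).
  set (f := fun s => - (q / k) * exp (- k * s)).
  assert (HI : is_RInt (fun s => exp (- k * s) * q) 0 t (minus (f t) (f 0))).
  { apply (@is_RInt_derive R_CompleteNormedModule).
    - intros x _. unfold f. auto_derive. auto. field. lra.
    - intros x _. apply (cont_mult (fun s => exp (- k * s)) (fun _ => q)). apply cont_exp_lin. apply cont_const. }
  rewrite (is_RInt_unique _ _ _ _ HI). unfold minus, plus, opp, f; simpl.
  rewrite Rmult_0_r, exp_0.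
  assert (0 < exp (- k * t)) by apply exp_pos.
  assert (q / k <= 1). { apply Rmult_le_reg_r with k; auto. unfold Rdiv. rewrite Rmult_assoc, Rinv_l by lra. unfold k; lra. }
  assert (0 <= q / k). { apply Rmult_le_pos; auto. left; apply Rinv_0_lt_compat; auto. }
  nra.
Qed.

Lemma fsum_cont {X : Type} (F : X -> R -> R) L : (forall x, Cont (F x)) -> Cont (fun r => fsum (fun x => F x r) L).
Proof.
  intro H. induction L; unfold fsum in *; simpl.
  - apply cont_const.
  - apply (cont_plus (F a) (fun r => fold_right (fun x acc => F x r + acc) 0 L)); auto.
Qed.

Section Main.
Context (l : nat) (lam mu : nat -> R) (theta : R).
Hypothesis Hlam : forall j, (j <= l)%nat -> 0 <= lam j.
Hypothesis Hmu : forall j, (j <= l)%nat -> 0 <= mu j.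
Hypothesis Hth : 0 < theta.

Notation V := (Vn l lam mu theta).

Lemma I_cont n a : (forall c, Cont (fun r => V n r c)) -> Cont (fun r => Iabs l lam mu theta (V n r) a).
Proof.
  intro H. unfold Iabs.
  apply (fsum_cont (fun e r => fst (fst e) * (snd (fst e) + V n r (snd e)))).
  intro e. apply cont_mult. apply cont_const. apply cont_plus. apply cont_const. apply H.
Qed.

Lemma Vn_cont n : forall a, Cont (fun t => V n t a).
Proof.
  induction n; intro a.
  - change (Cont (fun _ => 0)). apply cont_const.
  - intro x. apply (continuous_ext (Conv (qrate l lam mu theta a) (fun r => Iabs l lam mu theta (V n r) a))).
    + intro t. symmetry. apply Vn_S.
    + apply conv_cont. apply I_cont; auto.
Qed.

Lemma Vn_mono n : forall t, 0 <= t -> forall a, V n t a <= V (S n) t a.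
Proof.
  induction n; intros t Ht a.
  - change (V 0 t a) with 0. rewrite Vn_S. apply conv_nonneg; auto.
    + apply I_cont. apply Vn_cont.
    + intros r _. apply (I_nonneg l lam mu theta); auto. lra.
  - rewrite (Vn_S _ _ _ _ (S n)), (Vn_S _ _ _ _ n). apply conv_le; auto.
    + apply I_cont. apply Vn_cont.
    + apply I_cont. apply Vn_cont.
    + intros r Hr. apply (I_mono l lam mu theta); auto. lra. intro c. apply IHn. lra.
Qed.

Lemma qrate_add b k : (k <= l)%nat -> qrate l lam mu theta (addv b (unitv k)) = qrate l lam mu theta b + theta.
Proof.
  intro Hk. rewrite !qrate_dec.
  assert (E : fsum (fun j => theta * INR (addv b (unitv k) j)) (SS l) =
              fsum (fun j => theta * INR (b j) + (if Nat.eqb j k then theta else 0)) (SS l)).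
  { apply f_equal2; auto. apply functional_extensionality. intro j. unfold addv, unitv.
    destruct (Nat.eqb j k); rewrite ?INR_S', ?Nat.add_0_r; ring. }
  rewrite E, fsum_plus, fsum_indS by auto. ring.
Qed.

Lemma P12 n :
  (forall t, 0 <= t -> forall c k, (k <= l)%nat -> V n t (addv c (unitv k)) <= 1 + V n t c) /\
  (forall t, 0 <= t -> forall c i, (i <= l)%nat -> V n t (addv c (unitv i)) <= V n t (addv c (unitv 0))).
Proof.
  induction n.
  - split; intros; simpl; lra.
  - destruct IHn as [IH1 IH2]. split.
    + intros t Ht b k Hk.
      rewrite !Vn_S. rewrite qrate_add by auto.
      set (q := qrate l lam mu theta b).
      set (hb := fun r => Iabs l lam mu theta (V n r) b).
      assert (Hhb : Cont hb) by (apply I_cont; apply Vn_cont).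
      assert (Hq : 0 <= q).
      { unfold q. rewrite qrate_dec.
        assert (forall F : nat -> R, (forall j, In j (SS l) -> 0 <= F j) -> 0 <= fsum F (SS l)).
        { intros F HF. apply Rle_trans with (fsum (fun _ => 0) (SS l)).
          - clear. induction (SS l); unfold fsum in *; simpl; lra.
          - apply fsum_le; auto. }
        apply Rplus_le_le_0_compat; [apply Rplus_le_le_0_compat|]; apply H; intros j Hj; apply in_SS in Hj; auto.
        apply Rmult_le_pos. lra. apply pos_INR. }
      apply Rle_trans with (Conv (q + theta) (fun r => (hb r + theta * Conv q hb r) + q) t).
      * apply conv_le; auto.
        -- apply I_cont; apply Vn_cont.
        -- apply cont_plus. apply cont_plus; auto. apply cont_mult. apply cont_const. apply conv_cont; auto. apply cont_const.
        -- intros r Hr. replace (Conv q hb r) with (V (S n) r b) by (unfold hb, q; apply Vn_S). unfold hb.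
           apply (I_P1 l lam mu theta); auto. lra.
           intros c kk Hkk. apply IH1; auto. lra.
           apply Vn_mono. lra.
      * rewrite conv_plus.
        -- rewrite <- conv_ident by auto.
           assert (HB := conv_const_bound q theta t Hq Hth Ht). unfold hb in *. lra.
        -- apply cont_plus; auto. apply cont_mult. apply cont_const. apply conv_cont; auto.
        -- apply cont_const.
    + intros t Ht b i Hi.
      rewrite !Vn_S. rewrite !qrate_add by (auto; lia).
      apply conv_le; auto.
      * apply I_cont; apply Vn_cont.
      * apply I_cont; apply Vn_cont.
      * intros r Hr. apply (I_P2 l lam mu theta); auto. lra.
        intros c kk Hkk. apply IH1; auto. lra.
        intros c ii Hii. apply IH2; auto. lra.
Qed.
End Main.

Theorem lemma1 (l : nat) (lam mu : nat -> R) (theta : R)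
  (Hlam : forall i, (i <= l)%nat -> 0 < lam i)
  (Hmu : forall j, (j <= l)%nat -> 0 < mu j)
  (Htheta : 0 < theta)
  (T : R) (HT : 0 <= T) (A : state) (i : nat) (Hi : (i <= l)%nat) :
  Rbar_le (ExpMatches l lam mu theta T (addv A (unitv 0)))
          (Rbar_plus (Finite 1) (ExpMatches l lam mu theta T A)) /\
  Rbar_le (ExpMatches l lam mu theta T (addv A (unitv i)))
          (ExpMatches l lam mu theta T (addv A (unitv 0))).
Proof.
  assert (Hl : forall j, (j <= l)%nat -> 0 <= lam j) by (intros; left; auto).
  assert (Hm : forall j, (j <= l)%nat -> 0 <= mu j) by (intros; left; auto).
  unfold ExpMatches. split.
  - apply Rbar_le_trans with (Lim_seq (fun n => 1 + Vn l lam mu theta n T A)).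
    + apply Lim_seq_le_loc. exists 0%nat. intros n _.
      apply (proj1 (P12 l lam mu theta Hl Hm Htheta n)); auto. lia.
    + rewrite Lim_seq_plus.
      * rewrite Lim_seq_const. apply Rbar_le_refl.
      * apply ex_lim_seq_const.
      * apply ex_lim_seq_incr. intro n. apply Vn_mono; auto.
      * rewrite Lim_seq_const. destruct (Lim_seq (fun n => Vn l lam mu theta n T A)); simpl; auto.
  - apply Lim_seq_le_loc. exists 0%nat. intros n _.
    apply (proj2 (P12 l lam mu theta Hl Hm Htheta n)); auto.
Qed.
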